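(* Let $\ell:\mathbb{R}\to\mathbb{R}$ be non-decreasing, convex and non-negative, differentiable on $[-\ell(0)/2,\infty)$ with $\ell'(z)>0$ for $z\ge-\ell(0)/2$. Let $d=\sup\{z\in\mathbb{R}:\partial\ell(z)=\{0\}\}$, and $d=-\infty$ if there is no such $z$; assume $-\ell(0)/2>d$. For $\rho\ge-\ell(0)/2$ and $z\ge0$ define $\xi(z,\rho)=\frac{\ell(\rho+z)+\ell(\rho-z)-2\ell(\rho)}{z\ell'(\rho)}$ for $z>0$ and $\xi(0,\rho)=0$. Suppose there is a function $\bar\xi:[0,\infty)\to\mathbb{R}$ that is continuous and strictly increasing with $\bar\xi(0)=0$ and $\lim_{z\to\infty}\bar\xi(z)>1$, such that $\sup_{\rho\ge-\ell(0)/2}\xi(z,\rho)\le\bar\xi(z)$ for all $z\ge0$. Let $\psi(\theta,\rho)=\ell(\rho)-\inf_{z\in\mathbb{R}}\{\frac{1+\theta}{2}\ell(\rho-z)+\frac{1-\theta}{2}\ell(\rho+z)\}$. Then there exist $\varepsilon>0$ and a function $\widetilde\psi$ on $[0,\varepsilon]$ such that $\widetilde\psi(0)=0$, $\widetilde\psi(\theta)>0$ for $0<\theta\le\varepsilon$, $\widetilde\psi$ is continuous and strictly increasing on $[0,\varepsilon]$, and $\widetilde\psi(\theta)\le\inf_{\rho\ge-\ell(0)/2}\psi(\theta,\rho)$ for $0\le\theta\le\varepsilon$.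
   Context: $\partial\ell(z)$ denotes the subdifferential of the convex function $\ell$ at $z$. *)

(* Defs.v *)
From Stdlib Require Import Reals.
From Coquelicot Require Import Coquelicot.
Open Scope R_scope.

Definition convex_fun (l : R -> R) : Prop :=
  forall x y t, 0 <= t <= 1 -> l (t * x + (1 - t) * y) <= t * l x + (1 - t) * l y.

Definition nondecreasing (l : R -> R) : Prop := forall x y, x <= y -> l x <= l y.

Definition subdiff (l : R -> R) (z : R) : R -> Prop :=
  fun g => forall y, l y >= l z + g * (y - z).

Definition subdiff_is_zero (l : R -> R) (z : R) : Prop :=
  forall g, subdiff l z g <-> g = 0.

(* "d < c" where d = sup {z | subdiff l z = {0}} (d = -oo if the set is empty):
   the set has an upper bound strictly below c. *)
Definition d_lt (l : R -> R) (c : R) : Prop :=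
  exists b, b < c /\ forall z, subdiff_is_zero l z -> z <= b.

Definition xi (l : R -> R) (z rho : R) : R :=
  if Rlt_dec 0 z then (l (rho + z) + l (rho - z) - 2 * l rho) / (z * Derive l rho)
  else 0.

(* inf_z { (1+θ)/2 l(ρ-z) + (1-θ)/2 l(ρ+z) } (as a real; finite when l >= 0). *)
Definition inner_inf (l : R -> R) (theta rho : R) : R :=
  real (Glb_Rbar (fun v => exists z,
          v = (1 + theta) / 2 * l (rho - z) + (1 - theta) / 2 * l (rho + z))).

Definition psi (l : R -> R) (theta rho : R) : R := l rho - inner_inf l theta rho.

Definition strict_incr_on (A : R -> Prop) (f : R -> R) : Prop :=
  forall x y, A x -> A y -> x < y -> f x < f y.

(* Main.v *)
Require Import Defs.
From Stdlib Require Import Reals Lra Psatz.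
From Coquelicot Require Import Coquelicot.
Open Scope R_scope.

Lemma lub_le (E : R -> Prop) (M : R) v0 :
  E v0 -> (forall v, E v -> v <= M) ->
  (forall v, E v -> v <= real (Lub_Rbar E)) /\
  (forall b, (forall v, E v -> v <= b) -> real (Lub_Rbar E) <= b).
Proof.
  intros H0 HM.
  destruct (Lub_Rbar_correct E) as [Hub Hl].
  assert (HL: Rbar_le (Lub_Rbar E) M) by (apply Hl; intros x Hx; apply HM; auto).
  assert (HL0: Rbar_le v0 (Lub_Rbar E)) by (apply Hub; auto).
  destruct (Lub_Rbar E) as [r| |] eqn:Heq; simpl in *; try contradiction.
  split.
  - intros v Hv. exact (Hub v Hv).
  - intros b Hb. assert (H: r <= b) by (apply (Hl (Finite b)); intros x Hx; apply Hb; auto).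
    exact H.
Qed.

Lemma glb_le (E : R -> Prop) v :
  E v -> (forall w, E w -> 0 <= w) -> real (Glb_Rbar E) <= v.
Proof.
  intros Hv H0.
  destruct (Glb_Rbar_correct E) as [Hlb Hg].
  assert (HL: Rbar_le 0 (Glb_Rbar E)) by (apply Hg; intros x Hx; apply H0; auto).
  assert (HL0: Rbar_le (Glb_Rbar E) v) by (apply Hlb; auto).
  destruct (Glb_Rbar E); simpl in *; try contradiction; auto.
Qed.


Lemma tangent (l : R -> R) x y :
  convex_fun l -> ex_derive l x -> l y >= l x + (y - x) * Derive l x.
Proof.
  intros Hc Hd.
  set (D := Derive l x). set (h := y - x).
  destruct (Req_dec h 0) as [H0|Hn].
  { assert (y = x) by (unfold h in H0; lra). subst. unfold h; lra. }
  apply Rnot_lt_ge; intro Hlt.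
  pose proof (proj1 (is_derive_Reals l x D) (Derive_correct l x Hd)) as Hp.
  set (e := (h * D - (l y - l x)) / (2 * Rabs h)).
  assert (Hah : 0 < Rabs h) by (apply Rabs_pos_lt; auto).
  assert (He : 0 < e) by (unfold e; apply Rdiv_lt_0_compat; lra).
  destruct (Hp e He) as [del Hdel].
  set (t := Rmin (1/2) (del / (2 * Rabs h))).
  assert (Hdp := cond_pos del).
  assert (Ht0 : 0 < t) by (unfold t; apply Rmin_glb_lt; [lra| apply Rdiv_lt_0_compat; lra]).
  assert (Ht1 : t <= 1/2) by apply Rmin_l.
  assert (Ht2 : t <= del / (2 * Rabs h)) by apply Rmin_r.
  assert (Hu : t * h <> 0) by (apply Rmult_integral_contrapositive; split; lra).
  assert (Hua : Rabs (t * h) < del).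
  { rewrite Rabs_mult, (Rabs_pos_eq t) by lra.
    apply Rmult_le_compat_r with (r := Rabs h) in Ht2; [|lra].
    replace (del / (2 * Rabs h) * Rabs h) with (del/2) in Ht2 by (field; lra). lra. }
  specialize (Hdel (t*h) Hu Hua).
  assert (Ht01 : 0 <= t <= 1) by lra.
  assert (Hcv := Hc y x t Ht01).
  replace (t * y + (1 - t) * x) with (x + t * h) in Hcv by (unfold h; ring).
  set (q := (l (x + t * h) - l x) / (t * h)) in Hdel.
  assert (Hq : l (x + t*h) - l x = q * (t * h)) by (unfold q; field; repeat split; lra).
  assert (Hb : h * q <= l y - l x).
  { assert (t * (h*q) <= t * (l y - l x)) by (replace (t*(h*q)) with (q*(t*h)) by ring; lra).
    apply Rmult_le_reg_l with t; lra. }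
  assert (Hr : Rabs (h * (q - D)) < Rabs h * e).
  { rewrite Rabs_mult. apply Rmult_lt_compat_l; auto. }
  assert (Rabs h * e = (h * D - (l y - l x)) / 2) by (unfold e; field; lra).
  pose proof (Rle_abs (- (h * (q - D)))). rewrite Rabs_Ropp in H0.
  lra.
Qed.

Lemma ball_R (x e y : R) : ball x e y <-> Rabs (y - x) < e.
Proof. reflexivity. Qed.

Theorem lemma7 (l : R -> R) (xibar : R -> R) :
  nondecreasing l ->
  convex_fun l ->
  (forall z, 0 <= l z) ->
  (forall z, - l 0 / 2 <= z -> ex_derive l z /\ 0 < Derive l z) ->
  d_lt l (- l 0 / 2) ->
  continuous_on (fun z => 0 <= z) xibar ->
  strict_incr_on (fun z => 0 <= z) xibar ->
  xibar 0 = 0 ->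
  Rbar_lt (Finite 1) (Lim xibar p_infty) ->
  (forall z rho, 0 <= z -> - l 0 / 2 <= rho -> xi l z rho <= xibar z) ->
  exists eps, 0 < eps /\
    exists psit : R -> R,
      psit 0 = 0 /\
      (forall theta, 0 < theta <= eps -> 0 < psit theta) /\
      continuous_on (fun t => 0 <= t <= eps) psit /\
      strict_incr_on (fun t => 0 <= t <= eps) psit /\
      (forall theta rho, 0 <= theta <= eps -> - l 0 / 2 <= rho ->
         psit theta <= psi l theta rho).
Proof.
  intros Hnd Hcvx Hpos Hder _ Hcont Hinc Hx0 _ Hxi.
  set (r0 := - l 0 / 2) in *.
  set (c := Derive l r0).
  assert (Hc : 0 < c) by (apply Hder; lra).
  assert (Hxn : forall z, 0 <= z -> 0 <= xibar z).
  { intros z Hz. destruct (Req_dec z 0) as [->|Hz0]; [lra|].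
    rewrite <- Hx0. left. apply Hinc; lra. }
  set (E := fun th v => exists z, 0 <= z <= 1 /\ v = z * (th - xibar z)).
  set (g := fun th => real (Lub_Rbar (E th))).
  assert (Hg : forall th, (forall v, E th v -> v <= g th) /\
                 (forall b, (forall v, E th v -> v <= b) -> g th <= b)).
  { intros th. apply (lub_le (E th) (Rabs th) 0).
    - exists 0. split; [lra|ring].
    - intros v [z [Hz ->]]. pose proof (Hxn z (proj1 Hz)). pose proof (Rle_abs th).
      pose proof (Rabs_pos th). nra. }
  assert (HgE : forall th z, 0 <= z <= 1 -> z * (th - xibar z) <= g th).
  { intros th z Hz. apply (proj1 (Hg th)). exists z; auto. }
  assert (HD : forall rho, r0 <= rho -> c <= Derive l rho).
  { intros rho Hr. destruct (Hder r0 (Rle_refl _)) as [Hd0 _].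
    destruct (Hder rho Hr) as [Hd1 _].
    pose proof (tangent l r0 rho Hcvx Hd0). pose proof (tangent l rho r0 Hcvx Hd1).
    destruct (Req_dec rho r0) as [->|Hne]; [unfold c; lra|].
    fold c in H. nra. }
  assert (Hkey : forall th rho z, 0 <= th <= 1 -> r0 <= rho -> 0 <= z <= 1 ->
             c / 2 * (z * (th - xibar z)) <= psi l th rho).
  { intros th rho z Hth Hr Hz.
    set (S := fun v => exists z,
          v = (1 + th) / 2 * l (rho - z) + (1 - th) / 2 * l (rho + z)).
    assert (HS : forall w, S w -> 0 <= w).
    { intros w [z' ->]. pose proof (Hpos (rho - z')). pose proof (Hpos (rho + z')).
      apply Rplus_le_le_0_compat; apply Rmult_le_pos; lra. }
    assert (Hv : forall z', psi l th rho >= l rho -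
              ((1 + th) / 2 * l (rho - z') + (1 - th) / 2 * l (rho + z'))).
    { intros z'. unfold psi, inner_inf.
      assert (real (Glb_Rbar S) <= (1 + th) / 2 * l (rho - z') + (1 - th) / 2 * l (rho + z'))
        by (apply glb_le; [exists z'; reflexivity| exact HS]).
      fold S. lra. }
    assert (Hp0 : 0 <= psi l th rho).
    { pose proof (Hv 0). rewrite Rminus_0_r, Rplus_0_r in H. lra. }
    pose proof (Hxn z (proj1 Hz)) as Hxz.
    destruct (Req_dec z 0) as [->|Hz0]; [nra|].
    destruct (Rle_dec (xibar z) th) as [Hle|Hgt].
    2:{ assert (0 <= c / 2 * (z * (xibar z - th))) by (apply Rmult_le_pos; [lra|apply Rmult_le_pos; lra]). lra. }
    pose proof (Hv z) as Hvz.
    destruct (Hder rho Hr) as [Hdr HDp].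
    pose proof (HD rho Hr) as Hcd.
    set (D := Derive l rho) in *.
    pose proof (Hxi z rho (proj1 Hz) Hr) as Hx. unfold xi in Hx.
    destruct (Rlt_dec 0 z) as [Hzp|]; [|lra]. fold D in Hx.
    assert (HzD : 0 < z * D) by nra.
    assert (Hx' : l (rho + z) + l (rho - z) - 2 * l rho <= z * D * xibar z).
    { apply (Rmult_le_compat_r (z * D)) in Hx; [|lra].
      unfold Rdiv in Hx. rewrite Rmult_assoc, Rinv_l in Hx by lra. lra. }
    pose proof (tangent l rho (rho + z) Hcvx Hdr) as Ht. fold D in Ht.
    replace (rho + z - rho) with z in Ht by ring.
    pose proof (Hnd (rho - z) rho ltac:(lra)) as Hm.
    assert (0 <= th * (l (rho + z) - l (rho - z) - z * D)) by (apply Rmult_le_pos; lra).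
    assert (0 <= z * (th - xibar z) * (D - c)) by (apply Rmult_le_pos; [apply Rmult_le_pos|]; lra).
    nra. }
  exists 1. split; [lra|].
  exists (fun th => c / 2 * g th).
  assert (Hg0 : g 0 = 0).
  { apply Rle_antisym.
    - apply (proj2 (Hg 0)). intros v [z [Hz ->]]. pose proof (Hxn z (proj1 Hz)). nra.
    - pose proof (HgE 0 0). lra. }
  assert (Hgp : forall th, 0 < th -> 0 < g th).
  { intros th Hth.
    pose proof (Hcont 0 (Rle_refl 0)) as Hc0.
    destruct (proj1 (filterlim_locally _ _) Hc0 (mkposreal (th/2) ltac:(lra))) as [del Hdel].
    set (z := Rmin 1 (del / 2)).
    assert (Hdp := cond_pos del).
    assert (Hz : 0 < z <= 1) by (unfold z; split; [apply Rmin_glb_lt; lra | apply Rmin_l]).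
    assert (Hz2 : z <= del / 2) by apply Rmin_r.
    assert (Hb : ball 0 del z) by (apply ball_R; rewrite Rminus_0_r, Rabs_pos_eq; lra).
    specialize (Hdel z Hb ltac:(simpl; lra)). change (Rabs (xibar z - xibar 0) < th / 2) in Hdel.
    rewrite Hx0, Rminus_0_r in Hdel. pose proof (Rle_abs (xibar z)).
    pose proof (HgE th z ltac:(lra)). nra. }
  assert (Hlip : forall a b, g a <= g b + Rabs (a - b)).
  { intros a b. apply (proj2 (Hg a)). intros v [z [Hz ->]].
    pose proof (HgE b z Hz). pose proof (Rle_abs (a - b)). pose proof (Rabs_pos (a-b)). nra. }
  split; [rewrite Hg0; ring|].
  split; [intros th Hth; apply Rmult_lt_0_compat; [lra| apply Hgp; lra]|].
  split.
  { apply continuous_on_forall. intros x _.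
    apply (proj2 (filterlim_locally _ _)). intros eps.
    exists (mkposreal (eps / (c/2 + 1)) ltac:(apply Rdiv_lt_0_compat; [apply cond_pos|lra])).
    intros y Hy. change (Rabs (y - x) < eps / (c/2+1)) in Hy.
    change (Rabs (c / 2 * g y - c / 2 * g x) < eps).
    pose proof (Hlip x y) as L1. pose proof (Hlip y x) as L2. rewrite Rabs_minus_sym in L1.
    assert (Hgy : Rabs (g y - g x) <= Rabs (y - x)) by (apply Rabs_le; lra).
    replace (c / 2 * g y - c / 2 * g x) with (c/2 * (g y - g x)) by ring.
    rewrite Rabs_mult, (Rabs_pos_eq (c/2)) by lra.
    pose proof (cond_pos eps).
    assert (Rabs (y - x) * (c/2+1) < eps).
    { apply (Rmult_lt_compat_r (c/2+1)) in Hy; [|lra].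
      unfold Rdiv in Hy. rewrite Rmult_assoc, Rinv_l in Hy by lra. lra. }
    pose proof (Rabs_pos (y - x)). nra. }
  split.
  { intros a b Ha Hb Hab. simpl.
    apply Rmult_lt_compat_l; [lra|].
    assert (Hgb := Hgp b ltac:(lra)).
    assert (g a <= a / b * g b).
    { apply (proj2 (Hg a)). intros v [z [Hz ->]].
      pose proof (HgE b z Hz). pose proof (Hxn z (proj1 Hz)).
      assert (z * (a - xibar z) <= a / b * (z * (b - xibar z))).
      { apply (Rmult_le_reg_l b); [lra|].
        replace (b * (a / b * (z * (b - xibar z)))) with (a * (z * (b - xibar z))) by (field; lra).
        assert (0 <= (b - a) * (z * xibar z)) by (apply Rmult_le_pos; [lra| apply Rmult_le_pos; lra]).
        lra. }
      assert (0 <= a / b) by (apply Rdiv_le_0_compat; lra).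
      assert (a / b * (z * (b - xibar z)) <= a / b * g b) by (apply Rmult_le_compat_l; lra). lra. }
    assert (a / b < 1).
    { apply (Rmult_lt_reg_r b); [lra|]. unfold Rdiv. rewrite Rmult_assoc, Rinv_l by lra. lra. }
    assert (0 < (1 - a / b) * g b) by (apply Rmult_lt_0_compat; lra). lra. }
  intros th rho Hth Hr.
  apply (Rmult_le_reg_l (2 / c)); [apply Rdiv_lt_0_compat; lra|].
  replace (2 / c * (c / 2 * g th)) with (g th) by (field; lra).
  apply (proj2 (Hg th)). intros v [z [Hz ->]].
  pose proof (Hkey th rho z Hth Hr Hz).
  apply (Rmult_le_reg_l (c / 2)); [lra|].
  replace (c / 2 * (2 / c * psi l th rho)) with (psi l th rho) by (field; lra). lra.
Qed.
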